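(* If $\eta$ is a probability measure, then $\tau(K)\le\eta(K)$ for every closed set $K\subset\mathbb{X}$.
   Context: $\mathbb{X}$ is a compact metric space. $(\xi_j)_{j\in\mathbb N}$ is a sequence of finitely additive outer probabilities on $\mathbb{X}$ (set functions on all subsets, values in $[0,1]$, finitely additive, $\xi_j(\mathbb{X})=1$). For $A\subset\mathbb{X}$, $\tau(A)=\limsup_{n\to\infty}\frac1n\sum_{j=0}^{n-1}\xi_j(A)$. For $Y\subset\mathbb{X}$, $r>0$, $\nu_r(Y)=\inf\sum_{I\in\mathcal I}\tau(I)$ over countable covers $\mathcal I$ of $Y$ by open sets of diameter $\le r$; $\nu(Y)=\sup_{r>0}\nu_r(Y)$; $\eta$ is the restriction of $\nu$ to Borel sets. *)

(* Defs.v *)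
From HB Require Import structures.
From mathcomp Require Import all_boot all_order all_algebra.
From mathcomp Require Import all_classical all_reals all_analysis.
Set Implicit Arguments. Unset Strict Implicit. Unset Printing Implicit Defensive.
Import Order.TTheory GRing.Theory Num.Theory.
Local Open Scope classical_set_scope.
Local Open Scope ring_scope.

Section Defs.
Context {R : realType} {X : metricType R}.

Definition fa_outer_prob (xi : set X -> R) : Prop :=
  [/\ (forall A, 0 <= xi A <= 1),
      (forall A B, A `&` B = set0 -> xi (A `|` B) = xi A + xi B)
    & xi setT = 1].

Definition tau (xi : nat -> set X -> R) (A : set X) : \bar R :=
  limn_esup (fun n => ((n%:R)^-1 * \sum_(j < n) xi j A)%:E).

Definition diam (A : set X) : \bar R :=
  ereal_sup [set (mdist x y)%:E | x in A & y in A].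

Definition admissible_cover (r : R) (Y : set X) (I : nat -> set X) : Prop :=
  (forall k, open (I k) /\ (diam (I k) <= r%:E)%E) /\ Y `<=` \bigcup_k I k.

Definition nu_r (xi : nat -> set X -> R) (r : R) (Y : set X) : \bar R :=
  ereal_inf [set (\sum_(0 <= k <oo) tau xi (I k))%E | I in admissible_cover r Y].

Definition nu (xi : nat -> set X -> R) (Y : set X) : \bar R :=
  ereal_sup [set nu_r xi r Y | r in [set r : R | 0 < r]].

Definition borel_sets : set (set X) := <<s open >>.

Definition is_probability_on (B : set (set X)) (mu : set X -> \bar R) : Prop :=
  [/\ mu set0 = 0%E,
      (forall A, B A -> (0 <= mu A)%E),
      (forall F : nat -> set X, (forall n, B (F n)) -> trivIset setT F ->
          mu (\bigcup_n F n) = (\sum_(0 <= n <oo) mu (F n))%E)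
    & mu setT = 1%E].

End Defs.

(* Main.v *)
Require Import Defs.
From HB Require Import structures.
From mathcomp Require Import all_boot all_order all_algebra.
From mathcomp Require Import lra.
From mathcomp Require Import all_classical all_reals all_analysis.
Import Order.TTheory GRing.Theory Num.Theory.
Local Open Scope classical_set_scope.
Local Open Scope ring_scope.

Section Helpers.
Context {R : realType}.
Local Open Scope ereal_scope.

Lemma esup_mono (u v : (\bar R)^nat) : (forall n, u n <= v n) ->
  limn_esup u <= limn_esup v.
Proof.
move=> uv; rewrite !limn_esup_lim; apply: lee_lim; [exact: is_cvg_esups|exact: is_cvg_esups|].
apply: nearW => n; apply: ge_ereal_sup => _ [k /= nk <-].
apply: le_trans (uv k) _; apply: ereal_sup_ubound; by exists k.
Qed.

Lemma esups_ge0 (u : (\bar R)^nat) : (forall n, 0 <= u n) -> forall n, 0 <= esups u n.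
Proof.
move=> u0 n; apply: le_trans (u0 n) _; apply: ereal_sup_ubound; by exists n => /=.
Qed.

Lemma esup_ge0 (u : (\bar R)^nat) : (forall n, 0 <= u n) -> 0 <= limn_esup u.
Proof.
move=> u0; rewrite limn_esup_lim; apply: lime_ge; first exact: is_cvg_esups.
by apply: nearW => n; apply: esups_ge0.
Qed.

Lemma esup_le0 (u : (\bar R)^nat) : (forall n, u n <= 0) -> limn_esup u <= 0.
Proof.
move=> u0; rewrite limn_esup_lim; apply: lime_le; first exact: is_cvg_esups.
by apply: nearW => n; apply: ge_ereal_sup => _ [k _ <-].
Qed.

Lemma esup_add (u v : (\bar R)^nat) : (forall n, 0 <= u n) -> (forall n, 0 <= v n) ->
  limn_esup (fun n => u n + v n) <= limn_esup u + limn_esup v.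
Proof.
move=> u0 v0; rewrite !limn_esup_lim.
have h : forall n, esups (fun n => u n + v n) n <= (esups u \+ esups v) n.
  move=> n; apply: ge_ereal_sup => _ [k /= nk <-].
  apply: leeD; apply: ereal_sup_ubound; by exists k.
apply: le_trans (_ : limn (esups u \+ esups v) <= _).
  apply: lee_lim; [exact: is_cvg_esups| |exact: nearW].
  apply: is_cvgeD; [|exact: is_cvg_esups|exact: is_cvg_esups].
  apply: ge0_adde_def; rewrite inE; apply: lime_ge; try exact: is_cvg_esups;
    by apply: nearW; apply: esups_ge0.
rewrite limeD //; try exact: is_cvg_esups.
apply: ge0_adde_def; rewrite inE; apply: lime_ge; try exact: is_cvg_esups;
  by apply: nearW; apply: esups_ge0.
Qed.

End Helpers.

Section Main.
Context {R : realType} {X : metricType R}.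
Variable xi : nat -> set X -> R.
Hypothesis hxi : forall j, fa_outer_prob (xi j).

Lemma xi0 j : xi j set0 = 0.
Proof.
have [_ hadd _] := hxi j.
have := hadd set0 set0 (setI0 _); rewrite setU0 => h; lra.
Qed.

Lemma xi_ge0 j A : 0 <= xi j A.
Proof. by have [h _ _] := hxi j; have /andP[] := h A. Qed.

Lemma xi_mono j A B : A `<=` B -> xi j A <= xi j B.
Proof.
move=> AB; have [_ hadd _] := hxi j.
rewrite -(setDUK AB) hadd; last first.
  by apply/seteqP; split => x //= [Ax [_ nAx]].
by rewrite lerDl xi_ge0.
Qed.

Lemma xi_sub j A B : xi j (A `|` B) <= xi j A + xi j B.
Proof.
have [_ hadd _] := hxi j.
have -> : A `|` B = A `|` (B `\` A).
  apply/seteqP; split => x /=; [case=> [Ax|Bx]; [by left|]|case=> [Ax|[Bx _]]; by [left|right]].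
  by have [Ax|nAx] := pselect (A x); [left|right].
rewrite hadd; last by apply/seteqP; split => x //= [Ax [_ nAx]].
by rewrite lerD2l; apply: xi_mono => x [].
Qed.

Let useq A := fun n : nat => ((n%:R)^-1 * \sum_(j < n) xi j A)%:E.

Lemma useq_ge0 A n : (0 <= useq A n)%E.
Proof.
rewrite lee_fin mulr_ge0 // ?invr_ge0 // sumr_ge0 // => j _; exact: xi_ge0.
Qed.

Lemma tau_ge0 A : (0 <= tau xi A)%E.
Proof. apply: esup_ge0; exact: useq_ge0. Qed.

Lemma tau_mono A B : A `<=` B -> (tau xi A <= tau xi B)%E.
Proof.
move=> AB; apply: esup_mono => n; rewrite lee_fin ler_wpM2l ?invr_ge0 //.
by apply: ler_sum => j _; exact: xi_mono.
Qed.

Lemma tau_sub A B : (tau xi (A `|` B) <= tau xi A + tau xi B)%E.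
Proof.
rewrite /tau; apply: le_trans (@esup_add _ (useq A) (useq B) (useq_ge0 A) (useq_ge0 B)).
apply: esup_mono => n; rewrite /useq -EFinD lee_fin -mulrDr -big_split /=.
rewrite ler_wpM2l ?invr_ge0 //; apply: ler_sum => j _; exact: xi_sub.
Qed.

Lemma tau0 : (tau xi set0 <= 0)%E.
Proof.
apply: esup_le0 => n; rewrite lee_fin big1 ?mulr0 // => j _; exact: xi0.
Qed.

Lemma tau_finite (I : nat -> set X) N :
  (tau xi (\bigcup_(k in [set k | (k < N)%N]) I k) <= \sum_(0 <= k < N) tau xi (I k))%E.
Proof.
elim: N => [|N IH].
  rewrite big_geq //; apply: le_trans tau0; apply: tau_mono => x [k /=].
  by rewrite ltn0.
rewrite big_nat_recr //=.
apply: le_trans (_ : (tau xi (\bigcup_(k in [set k | (k < N)%N]) I k `|` I N) <= _)%E).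
  apply: tau_mono => x [k /= kN Ikx].
  move: kN Ikx; rewrite ltnS leq_eqVlt => /orP[/eqP ->|kN] Ikx; [by right|left; by exists k].
apply: le_trans (tau_sub _ _) _; exact: leeD.
Qed.

End Main.

Theorem mainTheorem15 (R : realType) (X : metricType R)
    (xi : nat -> set X -> R) :
  compact [set: X] ->
  (forall j, fa_outer_prob (xi j)) ->
  is_probability_on borel_sets (nu xi) ->
  forall K : set X, closed K -> (tau xi K <= nu xi K)%E.
Proof.
move=> cX hxi _ K cK.
have Kc : compact K by apply: subclosed_compact cK cX _.
apply: le_trans (_ : (nu_r xi 1 K <= _)%E); last first.
  by apply: ereal_sup_ubound; exists 1 => //=.
apply: le_ereal_inf_tmp => _ [I [Iop Icov] <-].
have [N _ HN] : \forall N \near \oo, K `<=` (fun x => exists2 k, (k < N)%N & I k x).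
  move/compact_near_coveringP: Kc; apply => //.
  move=> x Kx; have [k _ Ikx] := Icov x Kx.
  exists (I k, [set n | (k < n)%N]) => /=.
    split; last by exists k.+1.
    apply: open_nbhs_nbhs; split => //; exact: (Iop k).1.
  by move=> [y n] /= [Iy kn]; exists k.
set N' := N.
apply: (@le_trans _ _ (tau xi (\bigcup_(k in [set k | (k < N')%N]) I k))).
  apply: (@tau_mono _ _ xi hxi) => x /(HN N' (leqnn _)) [k kN Ikx]; by exists k.
apply: (@le_trans _ _ (\sum_(0 <= k < N') tau xi (I k))%E); first exact: (@tau_finite _ _ xi hxi I N').
apply: nneseries_lim_ge => n _ _; exact: (@tau_ge0 _ _ xi hxi).
Qed.
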